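(* Let $M$ be an extremally $\aleph_0$-saturated model of a complete affine theory $T$ and let $P,Q:M^n\to[0,\infty)$ be definable predicates. Then $Z(P)\subseteq Z(Q)$ if and only if for every $\epsilon>0$ there is $\lambda\ge0$ such that $Q(\bar x)\le\lambda P(\bar x)+\epsilon$ for all $\bar x\in M^n$.
   Context: Affine continuous logic: $L$-structures are complete metric spaces $(M,d)$ with $d\le1$ and Lipschitz interpretations of function symbols and $[0,1]$-valued relation symbols. Affine formulas are built from $1$ and atomic formulas (including $d$) using only $r\cdot\phi$ ($r\in\mathbb R$), $\phi+\psi$, $\inf_x$, $\sup_x$. For $A\subseteq M$, an $n$-type over $A$ is a maximal set of conditions with parameters from $A$ satisfiable with the theory of $(M,a)_{a\in A}$, identified with a positive normalized linear functional on formulas; a type is extreme if it is an extreme point of the convex set $S_n(A)$. $M$ is extremally $\aleph_0$-saturated if for every finite $A\subseteq M$ every extreme type in $S_n(A)$ is realized in $M$. A predicate $P:M^n\to\mathbb R$ is definable (without parameters) if it is a uniform limit of $\phi_k^M$ for affine formulas $\phi_k$. $Z(P)=\{\bar a\in M^n:P(\bar a)=0\}$. *)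

(* Defs.v *)
From Stdlib Require Rdefinitions.
From mathcomp Require Import all_boot all_order all_algebra.
From mathcomp Require Import boolp classical_sets reals Rstruct.

Set Implicit Arguments.
Unset Strict Implicit.
Unset Printing Implicit Defensive.

Import Order.TTheory GRing.Theory Num.Theory.
Local Open Scope ring_scope.
Local Open Scope classical_set_scope.

Notation R := Rdefinitions.R.

Record language := Language {
  funsym : Type;
  relsym : Type;
  farity : funsym -> nat;
  rarity : relsym -> nat }.

Section Syntax.
Variable L : language.

Inductive term : Type :=
  | Var : nat -> term
  | App : forall f : funsym L, ('I_(farity f) -> term) -> term.

(* Affine formulas: built from 1 and atomic formulas (relation symbols and
   the distance d) by r * phi, phi + psi, inf_x, sup_x.  Quantifiers bind the
   de Bruijn variable 0. *)
Inductive formula : Type :=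
  | FOne : formula
  | FRel : forall r : relsym L, ('I_(rarity r) -> term) -> formula
  | FDist : term -> term -> formula
  | FScale : R -> formula -> formula
  | FAdd : formula -> formula -> formula
  | FInf : formula -> formula
  | FSup : formula -> formula.

Fixpoint tbounded (m : nat) (t : term) : Prop :=
  match t with
  | Var i => (i < m)%N
  | App f ts => forall j, tbounded m (ts j)
  end.

Fixpoint fbounded (m : nat) (phi : formula) : Prop :=
  match phi with
  | FOne => True
  | FRel r ts => forall j, tbounded m (ts j)
  | FDist t1 t2 => tbounded m t1 /\ tbounded m t2
  | FScale _ psi => fbounded m psi
  | FAdd psi chi => fbounded m psi /\ fbounded m chi
  | FInf psi => fbounded m.+1 psi
  | FSup psi => fbounded m.+1 psi
  end.
End Syntax.

Arguments Var {L}.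
Arguments FOne {L}.

Record structure (L : language) := Structure {
  carrier :> Type;
  witness : carrier;  (* structures are nonempty *)
  dist : carrier -> carrier -> R;
  dist_ge0 : forall x y, 0 <= dist x y;
  dist_le1 : forall x y, dist x y <= 1;
  dist_eq0 : forall x y, dist x y = 0 <-> x = y;
  dist_sym : forall x y, dist x y = dist y x;
  dist_triangle : forall x y z, dist x z <= dist x y + dist y z;
  dist_complete : forall u : nat -> carrier,
      (forall e : R, 0 < e -> exists N, forall i j, (N <= i)%N -> (N <= j)%N ->
          dist (u i) (u j) < e) ->
      exists l, forall e : R, 0 < e -> exists N, forall i, (N <= i)%N ->
          dist (u i) l < e;
  funI : forall f : funsym L, ('I_(farity f) -> carrier) -> carrier;
  relI : forall r : relsym L, ('I_(rarity r) -> carrier) -> R;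
  funI_lipschitz : forall f, exists K : R, forall a b,
      dist (funI a) (funI b) <= K * \sum_(i < farity f) dist (a i) (b i);
  relI_range : forall r a, 0 <= @relI r a <= 1;
  relI_lipschitz : forall r, exists K : R, forall a b,
      `|@relI r a - @relI r b| <= K * \sum_(i < rarity r) dist (a i) (b i) }.

Section Semantics.
Variables (L : language) (M : structure L).

Definition scons (x : M) (v : nat -> M) : nat -> M :=
  fun i => if i is j.+1 then v j else x.

Fixpoint teval (t : term L) (v : nat -> M) : M :=
  match t with
  | Var i => v i
  | App f ts => funI (fun j => teval (ts j) v)
  end.

Fixpoint feval (phi : formula L) (v : nat -> M) : R :=
  match phi with
  | FOne => 1
  | FRel r ts => relI (fun j => teval (ts j) v)
  | FDist t1 t2 => dist (teval t1 v) (teval t2 v)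
  | FScale c psi => c * feval psi v
  | FAdd psi chi => feval psi v + feval chi v
  | FInf psi => inf (range (fun x : M => feval psi (scons x v)))
  | FSup psi => sup (range (fun x : M => feval psi (scons x v)))
  end.

(* the valuation x_0 .. x_{n-1}, followed by [rest] *)
Definition env (n : nat) (x : 'I_n -> M) (rest : nat -> M) : nat -> M :=
  fun i => oapp x (rest (i - n)%N) (insub i).

Definition default_env : nat -> M := fun _ => witness M.

(* Valuation for formulas in n variables with parameters a_0..a_{k-1}:
   variables 0..n-1 are the x's, variables n..n+k-1 are the parameters.
   (Variables >= n+k never occur in the formulas considered.) *)
Definition penv (n k : nat) (a : 'I_k -> M) (x : 'I_n -> M) : nat -> M :=
  env x (env a default_env).

(* S_n(A): positive normalized linear functionals on the affine formulas
   phi(x_0..x_{n-1}, a_0..a_{k-1}); positivity is with respect to the affine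
   theory of (M,a)_{a in A}: T_A |= phi >= 0 iff phi >= 0 on all of M^n.
   The functional is (by convention) 0 on formulas that are not of this form. *)
Definition type_space (n k : nat) (a : 'I_k -> M) : set (formula L -> R) :=
  [set p | [/\ forall phi, ~ fbounded (n + k) phi -> p phi = 0,
      p FOne = 1,
      forall c phi, fbounded (n + k) phi -> p (FScale c phi) = c * p phi,
      forall phi psi, fbounded (n + k) phi -> fbounded (n + k) psi ->
          p (FAdd phi psi) = p phi + p psi &
      forall phi, fbounded (n + k) phi ->
          (forall x : 'I_n -> M, 0 <= feval phi (penv a x)) -> 0 <= p phi]].

Definition extreme_in (S : set (formula L -> R)) (p : formula L -> R) : Prop :=
  S p /\ forall q1 q2 (t : R), S q1 -> S q2 -> 0 < t < 1 ->
    (forall phi, p phi = t * q1 phi + (1 - t) * q2 phi) ->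
    forall phi, q1 phi = p phi /\ q2 phi = p phi.

Definition realizes (n k : nat) (a : 'I_k -> M) (b : 'I_n -> M)
    (p : formula L -> R) : Prop :=
  forall phi, fbounded (n + k) phi -> p phi = feval phi (penv a b).

Definition extremally_aleph0_saturated : Prop :=
  forall (k : nat) (a : 'I_k -> M) (n : nat) (p : formula L -> R),
    extreme_in (type_space n a) p -> exists b : 'I_n -> M, realizes a b p.

Definition definable (n : nat) (P : ('I_n -> M) -> R) : Prop :=
  exists phis : nat -> formula L,
    (forall j, fbounded n (phis j)) /\
    forall e : R, 0 < e -> exists N, forall j, (N <= j)%N ->
      forall x : 'I_n -> M, `|P x - feval (phis j) (env x default_env)| <= e.

Definition zero_set (n : nat) (P : ('I_n -> M) -> R) : set ('I_n -> M) :=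
  [set x | P x = 0].

End Semantics.

(* Main.v *)
Require Import Defs.
From mathcomp Require Import all_boot all_order all_algebra.
From mathcomp Require Import boolp classical_sets reals Rstruct.
From mathcomp Require Import all_classical all_reals topology normedtype Rstruct_topology.
From mathcomp Require Import lra zify.
Import Order.TTheory GRing.Theory Num.Theory.
Import ArrowAsProduct.
Local Open Scope ring_scope.
Local Open Scope classical_set_scope.

Lemma dir_inter (T : topologicalType) (K : set T) (J : Type) (D : set J)
    (g : J -> set T) :
  compact K -> (exists j, D j) ->
  (forall j, D j -> closed (K `&` g j)) ->
  (forall j, D j -> (K `&` g j) !=set0) ->
  (forall i j, D i -> D j -> exists2 k, D k & g k `<=` g i `&` g j) ->
  exists x, K x /\ forall j, D j -> g j x.
Proof.
move=> cK Dne gcl gne gdir.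
pose G := fun j => K `&` g j.
have FF : Filter (filter_from D G).
  apply: filter_from_filter => // i j Di Dj.
  have [k Dk sk] := gdir i j Di Dj; exists k => // x [Kx gx].
  by have [] := sk x gx; split; split.
have PF : ProperFilter (filter_from D G).
  by apply: filter_from_proper => // j Dj; exact: gne.
have FK : filter_from D G K.
  by case: Dne => j Dj; exists j => // x [].
have [x [Kx clx]] := cK _ PF FK.
exists x; split => // j Dj.
have Fj : filter_from D G (G j) by exists j.
suff : closure (G j) x by move/(gcl j Dj) => [].
move=> B nB; exact: clx.
Qed.


Section Faces.
Variable I : eqType.
Notation X := (I -> R).
Variable K : set X.
Hypothesis cK : compact K.
Hypothesis clK : closed K.

Definition mix (t : R) (q1 q2 r : X) := forall i, r i = t * q1 i + (1 - t) * q2 i.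
Definition face (F : set X) := F `<=` K /\ forall q1 q2 r t, K q1 -> K q2 ->
  0 < t < 1 -> mix t q1 q2 r -> F r -> F q1 /\ F q2.
Definition affine (f : X -> R) := forall q1 q2 r t, K q1 -> K q2 -> K r ->
  0 < t < 1 -> mix t q1 q2 r -> f r = t * f q1 + (1 - t) * f q2.
Definition good (f : X -> R) := [/\ affine f,
  forall c, closed (K `&` [set p | c <= f p]) &
  exists B, forall p, K p -> f p <= B].
Definition nface F := [/\ F !=set0, closed F & face F].

Lemma invS_le (i k : nat) : (i <= k)%N -> (k.+1%:R : R)^-1 <= (i.+1%:R)^-1.
Proof.
move=> ik; rewrite lef_pV2 ?posrE ?ltr0n // ler_nat; lia.
Qed.

Lemma arch_le (c y : R) : (forall m : nat, c - (m.+1%:R)^-1 <= y) -> c <= y.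
Proof.
move=> H; rewrite leNgt; apply/negP => /ltr_add_invr [k hk].
have := H k; move: hk; set e := (k.+1%:R)^-1; lra.
Qed.

Lemma maxface F f : nface F -> good f ->
  exists c, (forall p, F p -> f p <= c) /\ nface (F `&` [set p | c <= f p]).
Proof.
move=> [[p0 Fp0] clF [FK Ff]] [aff clf [B hB]].
have hs : has_sup (f @` F).
  split; first by exists (f p0), p0.
  by exists B => _ [p Fp <-]; apply: hB; apply: FK.
set c := sup (f @` F).
have ub : forall p, F p -> f p <= c.
  by move=> p Fp; apply: (ub_le_sup hs.2); exists p.
exists c; split => //.
have eqI : forall d, F `&` [set p | d <= f p] = F `&` (K `&` [set p | d <= f p]).
  move=> d; apply/seteqP; split => p /=; first by move=> [Fp h]; split => //; split => //; apply: FK.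
  by move=> [Fp [_ h]].
split.
- pose g (m : nat) := F `&` [set p | c - (m.+1%:R)^-1 <= f p].
  have [x [Kx hx]] : exists x, K x /\ forall j, setT j -> g j x.
    apply: (@dir_inter _ K nat setT g cK).
    + by exists 0%N.
    + move=> j _; have -> : K `&` g j = F `&` (K `&` [set p | c - (j.+1%:R)^-1 <= f p]).
        apply/seteqP; split => p /=; first by move=> [Kp [Fp h]].
        by move=> [Fp [Kp h]].
      exact: closedI.
    + move=> j _.
      have ep : 0 < (j.+1%:R : R)^-1 by rewrite invr_gt0 ltr0Sn.
      have [_ [p Fp <-] hp] := sup_adherent ep hs.
      by exists p; split; [apply: FK|split => //; apply: ltW].
    + move=> i j _ _; exists (maxn i j) => // p [Fp hp]; split; split => //=.
        apply: le_trans hp; rewrite lerD2l lerN2; apply: invS_le; exact: leq_maxl.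
      apply: le_trans hp; rewrite lerD2l lerN2; apply: invS_le; exact: leq_maxr.
  exists x; have [Fx _] := hx 0%N Logic.I.
  split => //; apply: arch_le => m; by have [_ ] := hx m Logic.I.
- by rewrite eqI; apply: closedI.
- split; first by move=> p [/FK].
  move=> q1 q2 r t Kq1 Kq2 ht hm [Fr hr].
  have [Fq1 Fq2] := Ff _ _ _ _ Kq1 Kq2 ht hm Fr.
  have e := aff _ _ _ _ Kq1 Kq2 (FK _ Fr) ht hm.
  have u1 := ub _ Fq1; have u2 := ub _ Fq2.
  move: hr; rewrite /= e => hr; case/andP: ht => t0 t1.
  split; split => //=; nra.
Qed.


Lemma coord_good (i : I) : (exists B, forall p, K p -> p i <= B) -> good (fun p => p i).
Proof.
move=> hB; split; last exact: hB.
- by move=> q1 q2 r t _ _ _ _ hm; apply: hm.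
- move=> c; apply: closedI => //.
  have -> : [set p : X | c <= p i] = proj i @^-1` [set x : R | c <= x] by [].
  apply: preimage_closed; last exact: closed_ge.
  by move=> p _; apply: proj_continuous.
Qed.

Lemma extreme F : nface F -> (forall i, exists B, forall p, K p -> p i <= B) ->
  exists p, F p /\ forall q1 q2 t, K q1 -> K q2 -> 0 < t < 1 -> mix t q1 q2 p ->
     forall i, q1 i = p i /\ q2 i = p i.
Proof.
move=> nF hB.
pose T := {G : set X | nface G /\ G `<=` F}.
pose Rl := fun a b : T => `[< sval b `<=` sval a >].
have [t0 Ht0] : exists t, forall s, Rl t s -> s = t.
  apply: (@Zorn T Rl).
  - by move=> t; apply/asboolP.
  - by move=> r s t /asboolP h1 /asboolP h2; apply/asboolP => x /h2 /h1.
  - move=> [s hs] [t ht] /asboolP h1 /asboolP h2 /=.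
    have e : s = t by apply/seteqP; split.
    subst t; congr exist; exact: Prop_irrelevance.
  - move=> A Atot.
    pose g := fun o : option T => if o is Some G then sval G else F.
    pose D := fun o : option T => if o is Some G then A G else True.
    have gface : forall o, D o -> nface (g o).
      by case => [[G [hG _]]|] //.
    have gF : forall o, D o -> g o `<=` F by case => [[G [_ hG]]|] _ //= x.
    have hne : (\bigcap_(o in D) g o) !=set0.
      have [x [Kx hx]] : exists x, K x /\ forall o, D o -> g o x.
        apply: (@dir_inter _ K (option T) D g cK).
        + by exists None.
        + move=> o Do; apply: closedI => //; by case: (gface o Do).
        + move=> o Do; case: (gface o Do) => [[x gx] _ [gK _]].
          by exists x; split => //; apply: gK.
        + case => [G|]; case => [H|] //= DG DH.
          * have [/asboolP h|/asboolP h] := Atot _ _ DG DH.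
            - by exists (Some H) => // x hx; split => //; apply: h.
            - by exists (Some G) => // x hx; split => //; apply: h.
          * by exists (Some G) => // x hx; split => //; apply: (gF (Some G)).
          * by exists (Some H) => // x hx; split => //; apply: (gF (Some H)).
          * by exists None.
      by exists x => o Do; apply: hx.
    have hnf : nface (\bigcap_(o in D) g o).
      split => //.
      + by apply: closed_bigI => o Do; case: (gface o Do).
      + split.
        * move=> x hx; have [_ _ [gK _]] := gface None Logic.I.
          by apply: gK; apply: (hx None).
        * move=> q1 q2 r t Kq1 Kq2 ht hm hr; split => o Do;
          have [_ _ [_ gf]] := gface o Do;
          by have [] := gf _ _ _ _ Kq1 Kq2 ht hm (hr o Do).
    have hsub : (\bigcap_(o in D) g o) `<=` F by move=> x hx; apply: (hx None).
    exists (exist (fun G : set X => nface G /\ G `<=` F) _ (conj hnf hsub)) => s As; apply/asboolP => x hx.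
    exact: (hx (Some s)).
case: t0 Ht0 => [G0 [nG0 G0F]] Ht0.
have single : forall p q, G0 p -> G0 q -> p = q.
  move=> p q Gp Gq; apply/funext => i.
  have [c [ub nG']] := @maxface G0 (fun p : X => p i) nG0 (@coord_good i (hB i)).
  have sub : (G0 `&` [set p | c <= p i]) `<=` F by move=> x [/G0F].
  have := Ht0 (exist (fun G : set X => nface G /\ G `<=` F) _ (conj nG' sub)).
  move=> H.
  have Rl0 : Rl (exist (fun G : set X => nface G /\ G `<=` F) G0 (conj nG0 G0F)) (exist (fun G : set X => nface G /\ G `<=` F) _ (conj nG' sub)).
    by apply/asboolP => x [].
  move: (H Rl0) => [e].
  have Gp' : (G0 `&` [set p | c <= p i]) p by rewrite e.
  have Gq' : (G0 `&` [set p | c <= p i]) q by rewrite e.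
  case: Gp' => _ /= h1; case: Gq' => _ /= h2.
  have := ub _ Gp; have := ub _ Gq; lra.
case: (nG0) => [[p Gp] _ [G0K G0f]].
exists p; split; first exact (G0F _ Gp).
move=> q1 q2 t Kq1 Kq2 ht hm i.
have [G1 G2] := G0f _ _ _ _ Kq1 Kq2 ht hm Gp.
by rewrite (single _ _ G1 Gp) (single _ _ G2 Gp).
Qed.

End Faces.


Lemma arch_gen (c y k : R) : 0 <= k ->
  (forall m : nat, c - k * (m.+1%:R)^-1 <= y) -> c <= y.
Proof.
move=> k0 H; rewrite leNgt; apply/negP => yc.
pose d := (c - y) / (k + 1).
have k1 : 0 < k + 1 by lra.
have d0 : 0 < d by rewrite /d divr_gt0 //; lra.
have dk : d * (k + 1) = c - y by rewrite /d mulfVK // lt0r_neq0.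
have [m hm] := ltr_add_invr d0.
have := H m; move: hm; set e := (m.+1%:R)^-1 => hm.
have e0 : 0 < e by rewrite /e invr_gt0 ltr0Sn.
nra.
Qed.

Section Topo.
Variable I : eqType.
Notation X := (I -> R).

Lemma cont_lin3 (i j k : I) (a b : R) :
  continuous (fun p : X => p i - (a * p j + b * p k)).
Proof.
move=> x.
apply: (@continuousB _ R^o _ (fun p : I -> R => p i) (fun p : I -> R => a * p j + b * p k)).
- exact: (@proj_continuous I (fun=> R) i).
- apply: (@continuousD _ R^o _ (fun p : I -> R => a * p j) (fun p : I -> R => b * p k)).
  + apply: (@continuousM R (I -> R) (fun=> a) (fun p : I -> R => p j)); [exact: cst_continuous|exact: (@proj_continuous I (fun=> R) j)].
  + apply: (@continuousM R (I -> R) (fun=> b) (fun p : I -> R => p k)); [exact: cst_continuous|exact: (@proj_continuous I (fun=> R) k)].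
Qed.

Lemma closed_lin3 (i j k : I) (a b d : R) :
  closed [set p : X | p i - (a * p j + b * p k) = d].
Proof.
have -> : [set p : X | p i - (a * p j + b * p k) = d] =
  (fun p : X => p i - (a * p j + b * p k)) @^-1` [set x | x = d] by [].
apply: preimage_closed; last exact: closed_eq.
by move=> p _; apply: cont_lin3.
Qed.

Lemma closed_coord_ge (i : I) (c : R) : closed [set p : X | c <= p i].
Proof.
have -> : [set p : X | c <= p i] = proj i @^-1` [set x : R | c <= x] by [].
apply: preimage_closed; last exact: closed_ge.
by move=> p _; apply: proj_continuous.
Qed.

Lemma closed_coord_le (i : I) (c : R) : closed [set p : X | p i <= c].
Proof.
have -> : [set p : X | p i <= c] = proj i @^-1` [set x : R | x <= c] by [].
apply: preimage_closed; last exact: closed_le.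
by move=> p _; apply: proj_continuous.
Qed.

Lemma closed_ext (A B : set X) : (forall p, A p <-> B p) -> closed A -> closed B.
Proof. by move=> h; have -> : B = A by apply/seteqP; split => p /h. Qed.

Lemma closed_impl (P : Prop) (A : set X) : closed A -> closed [set p | P -> A p].
Proof.
move=> cA; case: (pselect P) => hP.
  by apply: (@closed_ext A) => // p; split => [h _|h]; [exact: h|exact: h hP].
apply: (@closed_ext setT); last exact: closedT.
by move=> p; split => // _ /hP.
Qed.

Lemma closed_forall (J : Type) (A : J -> set X) :
  (forall j, closed (A j)) -> closed [set p | forall j, A j p].
Proof.
move=> h; apply: (@closed_ext (\bigcap_(j in setT) A j)).
  by move=> p; split => [H j|H j _]; [apply: H|apply: H].
by apply: closed_bigI => j _; apply: h.
Qed.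

Lemma closed_and5 (A B C D E : set X) : closed A -> closed B -> closed C ->
  closed D -> closed E -> closed [set p | [/\ A p, B p, C p, D p & E p]].
Proof.
move=> cA cB cC cD cE.
apply: (@closed_ext (A `&` (B `&` (C `&` (D `&` E))))).
  by move=> p; split => [[? [? [? [? ?]]]]|[]].
by repeat apply: closedI.
Qed.

End Topo.


Section Bound.
Variables (L : language) (M : structure L).

Lemma fbound (phi : formula L) :
  exists B : R, 0 <= B /\ forall v : nat -> M, `|feval phi v| <= B.
Proof.
elim: phi => [|r ts|t1 t2|c psi IH|psi IH1 chi IH2|psi IH|psi IH].
- by exists 1; split => // v /=; rewrite normr1.
- exists 1; split => // v /=; have /andP[h0 h1] := relI_range (fun j => teval (ts j) v).
  by rewrite ger0_norm.
- exists 1; split => // v /=; rewrite ger0_norm ?dist_ge0 //; exact: dist_le1.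
- case: IH => B [B0 hB]; exists (`|c| * B); split; first exact: mulr_ge0.
  by move=> v /=; rewrite normrM; apply: ler_wpM2l => //.
- case: IH1 => B1 [B10 hB1]; case: IH2 => B2 [B20 hB2]; exists (B1 + B2).
  split; first lra.
  by move=> v /=; apply: le_trans (ler_normD _ _) _; apply: lerD.
- case: IH => B [B0 hB]; exists B; split => // v /=.
  pose S := range (fun x : M => feval psi (scons x v)).
  change (`|inf S| <= B).
  have Sne : S !=set0 by exists (feval psi (scons (witness M) v)), (witness M).
  have lb : lbound S (- B).
    by move=> _ [x _ <-]; have := hB (scons x v); rewrite ler_norml => /andP[].
  have ub : ubound S B.
    by move=> _ [x _ <-]; have := hB (scons x v); rewrite ler_norml => /andP[].
  rewrite ler_norml; apply/andP; split; first exact: lb_le_inf.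
  case: Sne => y Sy; apply: le_trans (ub _ Sy).
  by apply: (ge_inf (ex_intro _ (-B) lb)).
- case: IH => B [B0 hB]; exists B; split => // v /=.
  pose S := range (fun x : M => feval psi (scons x v)).
  change (`|sup S| <= B).
  have Sne : S !=set0 by exists (feval psi (scons (witness M) v)), (witness M).
  have lb : lbound S (- B).
    by move=> _ [x _ <-]; have := hB (scons x v); rewrite ler_norml => /andP[].
  have ub : ubound S B.
    by move=> _ [x _ <-]; have := hB (scons x v); rewrite ler_norml => /andP[].
  rewrite ler_norml; apply/andP; split; last exact: ge_sup.
  case: Sne => y Sy; apply: le_trans (lb _ Sy) _.
  by apply: (ub_le_sup (ex_intro _ B ub)).
Qed.
End Bound.


Lemma subr0_eq (x y : R) : x - y = 0 <-> x = y.
Proof.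
split => [h|->]; last by rewrite subrr.
by apply/eqP; rewrite -subr_eq0; apply/eqP.
Qed.

Section Types.
Variables (L : language) (M : structure L) (n : nat).
Definition a0 : 'I_0 -> M := fun _ => witness M.
Definition FI := {classic (formula L)}.
Definition KK : set (FI -> R) := type_space n a0.

Lemma penvE (x : 'I_n -> M) : penv a0 x = env x (default_env M).
Proof.
apply/funext => i; rewrite /penv /env /=; congr oapp.
by case: insub.
Qed.

Definition tp (x : 'I_n -> M) : formula L -> R :=
  fun phi => if `[< fbounded (n + 0) phi >] then feval phi (penv a0 x) else 0.

Lemma tp_in x : KK (tp x).
Proof.
rewrite /KK /type_space /tp; split.
- by move=> phi /asboolPn /negbTE ->.
- by rewrite asboolT.
- move=> c phi hb; rewrite asboolT // asboolT //.
- move=> phi psi h1 h2; rewrite asboolT /=; last by split.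
  by rewrite asboolT // asboolT.
- by move=> phi hb hp; rewrite asboolT.
Qed.

Lemma KK_lin p : KK p ->
  [/\ forall phi, ~ fbounded (n + 0) phi -> p phi = 0, p FOne = 1,
      forall c phi, fbounded (n + 0) phi -> p (FScale c phi) = c * p phi,
      forall phi psi, fbounded (n + 0) phi -> fbounded (n + 0) psi ->
          p (FAdd phi psi) = p phi + p psi &
      forall phi, fbounded (n + 0) phi ->
          (forall x : 'I_n -> M, 0 <= feval phi (penv a0 x)) -> 0 <= p phi].
Proof. by []. Qed.

Lemma KK_mono p phi psi e : KK p -> fbounded (n + 0) phi -> fbounded (n + 0) psi ->
  (forall x : 'I_n -> M, feval phi (penv a0 x) <= feval psi (penv a0 x) + e) -> p phi <= p psi + e.
Proof.
move=> Kp b1 b2 H; have [h0 h1 hS hA hP] := KK_lin p Kp.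
pose chi := FAdd (FAdd psi (FScale e FOne)) (FScale (-1) phi).
have bc : fbounded (n + 0) chi by rewrite /chi /=.
have := hP chi bc.
rewrite hA; [|by split|by []].
rewrite hA // hS // hS // h1.
have : forall x : 'I_n -> M, 0 <= feval chi (penv a0 x).
  by move=> x /=; have := H x; lra.
move=> hc /(_ hc); lra.
Qed.

Lemma KK_abs phi : exists B : R, 0 <= B /\ forall p, KK p -> `|p phi| <= B.
Proof.
have [B [B0 hB]] := @fbound _ M phi.
exists B; split => // p Kp.
case: (pselect (fbounded (n + 0) phi)) => hb; last first.
  by have [h0 _ _ _ _] := KK_lin p Kp; rewrite h0 // normr0.
have [h0 h1 hS hA hP] := KK_lin p Kp.
have z : fbounded (n + 0) (FScale 0 (@FOne L)) by [].
have pz : p (FScale 0 FOne) = 0 by rewrite hS // mul0r.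
have H1 : p (FScale 0 FOne) <= p phi + B.
  apply: (@KK_mono p (FScale 0 FOne) phi B Kp z hb) => x /=.
  by have := hB (penv a0 x); rewrite ler_norml mul0r => /andP[]; lra.
have H2 : p phi <= p (FScale 0 FOne) + B.
  apply: (@KK_mono p phi (FScale 0 FOne) B Kp hb z) => x /=.
  by have := hB (penv a0 x); rewrite ler_norml mul0r => /andP[]; lra.
rewrite pz in H1 H2; rewrite ler_norml; apply/andP; split; lra.
Qed.

Lemma KK_closed : closed KK.
Proof.
rewrite /KK /type_space.
apply: closed_and5.
- apply: closed_forall => phi; apply: closed_impl.
  apply: (@closed_ext _ [set p : FI -> R | p phi - (0 * p phi + 0 * p phi) = 0]); last exact: closed_lin3.
  by move=> p; rewrite /= !mul0r addr0 subr0.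
- apply: (@closed_ext _ [set p : FI -> R | p (@FOne L) - (0 * p FOne + 0 * p FOne) = 1]); last exact: closed_lin3.
  by move=> p; rewrite /= !mul0r addr0 subr0.
- apply: closed_forall => c; apply: closed_forall => phi; apply: closed_impl.
  apply: (@closed_ext _ [set p : FI -> R | p (FScale c phi) - (c * p phi + 0 * p phi) = 0]); last exact: closed_lin3.
  by move=> p; rewrite /= mul0r addr0 subr0_eq.
- apply: closed_forall => phi; apply: closed_forall => psi; apply: closed_impl; apply: closed_impl.
  apply: (@closed_ext _ [set p : FI -> R | p (FAdd phi psi) - (1 * p phi + 1 * p psi) = 0]); last exact: closed_lin3.
  by move=> p; rewrite /= !mul1r subr0_eq.
- apply: closed_forall => phi; apply: closed_impl; apply: closed_impl.
  exact: closed_coord_ge.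
Qed.

Lemma KK_compact : compact KK.
Proof.
have [Bf hBf] := choice (fun (phi : FI) => KK_abs phi).
pose box := [set p : FI -> R | forall i : FI, `[- Bf i, Bf i] (p i)].
have cbox : compact box.
  have h := (@tychonoff FI (fun=> R) (fun i => `[- Bf i, Bf i]) (fun i => @segment_compact R (- Bf i) (Bf i))).
  exact h.
apply: (subclosed_compact KK_closed cbox) => p Kp i.
have [_ h] := hBf i; have := h p Kp.
by rewrite ler_norml => hh; rewrite /= in_itv /=.
Qed.

End Types.

Set Implicit Arguments.

Notation ee m := ((m.+1%:R : R)^-1).

Lemma ee_gt0 m : 0 < ee m.
Proof. by rewrite invr_gt0 ltr0Sn. Qed.

Section Hat.
Variables (L : language) (M : structure L) (n : nat).
Variables (Qf : ('I_n -> M) -> R) (psi : nat -> formula L).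
Hypothesis hb : forall m, fbounded n (psi m).
Hypothesis ha : forall m x, `|Qf x - feval (psi m) (env x (default_env M))| <= ee m.

Notation K := (@KK L M n).

Lemma hb' m : fbounded (n + 0) (psi m).
Proof. by rewrite addn0. Qed.

Lemma hat_key p : K p -> forall m l, p (psi m) <= p (psi l) + (ee m + ee l).
Proof.
move=> Kp m l; apply: (@KK_mono _ _ _ p (psi m) (psi l) _ Kp (hb' m) (hb' l)) => x.
rewrite penvE; have := ha m x; have := ha l x; rewrite !ler_norml.
set u := ee m; set w := ee l; move=> /andP[? ?] /andP[? ?]; lra.
Qed.

Definition hat (p : FI L -> R) := sup (range (fun m => p (psi m) - ee m)).

Lemma hat_approx p : K p -> forall l, p (psi l) - ee l <= hat p <= p (psi l) + ee l.
Proof.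
move=> Kp l.
have ub : forall l, ubound (range (fun m => p (psi m) - ee m)) (p (psi l) + ee l).
  move=> l' _ [m _ <-]; have := hat_key Kp m l'; set u := ee m; set w := ee l'; lra.
have hs : has_sup (range (fun m => p (psi m) - ee m)).
  by split; [exists (p (psi 0%N) - ee 0%N), 0%N|exists (p (psi 0%N) + ee 0%N); apply: ub].
apply/andP; split.
  by apply: (ub_le_sup hs.2); exists l.
by apply: ge_sup; [case: hs|apply: ub].
Qed.

Lemma hat_affine : @affine (FI L) K hat.
Proof.
move=> q1 q2 r t K1 K2 Kr /andP[t0 t1] hm.
apply/eqP; rewrite eq_le; apply/andP; split.
- rewrite -subr_ge0; apply: (@arch_gen 0 _ 2) => // m.
  have := hat_approx K1 m; have := hat_approx K2 m; have := hat_approx Kr m.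
  rewrite hm; set u := ee m; move=> /andP[a1 a2] /andP[b1 b2] /andP[c1 c2].
  have e0 : 0 < u by apply: ee_gt0.
  nra.
- rewrite -subr_ge0; apply: (@arch_gen 0 _ 2) => // m.
  have := hat_approx K1 m; have := hat_approx K2 m; have := hat_approx Kr m.
  rewrite hm; set u := ee m; move=> /andP[a1 a2] /andP[b1 b2] /andP[c1 c2].
  have e0 : 0 < u by apply: ee_gt0.
  nra.
Qed.

Lemma hat_closed_ge c : closed (K `&` [set p | c <= hat p]).
Proof.
apply: (@closed_ext _ (K `&` [set p | forall l, c - ee l <= p (psi l)])).
  move=> p; split => -[Kp /= h]; split => //=.
    apply: (@arch_gen _ _ 2) => // m; have := h m; have := hat_approx Kp m.
    set u := ee m => /andP[? ?]; lra.
  move=> l; have := hat_approx Kp l; set u := ee l => /andP[? ?]; lra.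
apply: closedI; first exact: KK_closed.
apply: closed_forall => l; exact: closed_coord_ge.
Qed.

Lemma hat_closed_le c : closed (K `&` [set p | hat p <= c]).
Proof.
apply: (@closed_ext _ (K `&` [set p | forall l, p (psi l) <= c + ee l])).
  move=> p; split => -[Kp /= h]; split => //=.
    rewrite -lerN2; apply: (@arch_gen _ _ 2) => // m; have := h m; have := hat_approx Kp m.
    set u := ee m => /andP[? ?]; lra.
  move=> l; have := hat_approx Kp l; set u := ee l => /andP[? ?]; lra.
apply: closedI; first exact: KK_closed.
apply: closed_forall => l; exact: closed_coord_le.
Qed.

Lemma hat_bound : exists B, forall p, K p -> `|hat p| <= B.
Proof.
have [B [B0 hB]] := @KK_abs L M n (psi 0%N).
exists (B + 1) => p Kp; have := hat_approx Kp 0%N; have := hB p Kp.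
rewrite !ler_norml /= invr1 => /andP[? ?] /andP[? ?]; apply/andP; split; lra.
Qed.

Lemma hat_good : @good (FI L) K hat.
Proof.
split; [exact: hat_affine|exact: hat_closed_ge|].
have [B hB] := hat_bound; exists B => p Kp; have := hB p Kp; rewrite ler_norml; by case/andP.
Qed.

Lemma hatN_good : @good (FI L) K (fun p => - hat p).
Proof.
split.
- move=> q1 q2 r t K1 K2 Kr ht hm; rewrite (hat_affine K1 K2 Kr ht hm); lra.
- move=> c; apply: (@closed_ext _ (K `&` [set p | hat p <= - c])); last exact: hat_closed_le.
  by move=> p; split => -[Kp /= h]; split => //=; lra.
- have [B hB] := hat_bound; exists B => p Kp; have := hB p Kp; rewrite ler_norml => /andP[]; lra.
Qed.

Lemma hat_real p b : K p -> (forall l, p (psi l) = feval (psi l) (env b (default_env M))) ->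
  hat p = Qf b.
Proof.
move=> Kp hr; apply/eqP; rewrite eq_le; apply/andP; split.
- apply: (@arch_gen _ _ 2) => // m; have := hat_approx Kp m; have := ha m b.
  rewrite hr ler_norml; set u := ee m => /andP[? ?] /andP[? ?]; lra.
- apply: (@arch_gen _ _ 2) => // m; have := hat_approx Kp m; have := ha m b.
  rewrite hr ler_norml; set u := ee m => /andP[? ?] /andP[? ?]; lra.
Qed.

Lemma hat_tp x : hat (@tp L M n x) = Qf x.
Proof.
apply: hat_real; first exact: tp_in.
move=> l; rewrite /tp asboolT; [by rewrite penvE|exact: hb'].
Qed.

End Hat.

Unset Implicit Arguments.

Lemma get_approx (L : language) (M : structure L) (n : nat) (Qf : ('I_n -> M) -> R) :
  definable Qf -> exists psi : nat -> formula L, (forall m, fbounded n (psi m)) /\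
    forall m x, `|Qf x - feval (psi m) (env x (default_env M))| <= ee m.
Proof.
move=> [phis [hb hc]].
have [Nf hN] := choice (fun m : nat => hc _ (ee_gt0 m)).
exists (fun m => phis (Nf m)); split => // m x.
exact: (hN m (Nf m) (leqnn _) x).
Qed.

Lemma hat_nonneg (L : language) (M : structure L) (n : nat) (Qf : ('I_n -> M) -> R)
  (psi : nat -> formula L) (hb : forall m, fbounded n (psi m))
  (ha : forall m x, `|Qf x - feval (psi m) (env x (default_env M))| <= ee m) :
  (forall x, 0 <= Qf x) -> forall p, @KK L M n p -> 0 <= hat psi p.
Proof.
move=> Q0 p Kp.
have [h0 h1 hS hA hP] := @KK_lin L M n p Kp.
have z : fbounded (n + 0) (FScale 0 (@FOne L)) by [].
have pz : p (FScale 0 FOne) = 0 by rewrite hS // mul0r.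
apply: (@arch_gen _ _ 2) => // m.
have := hat_approx _ _ hb ha Kp m.
have : p (FScale 0 FOne) <= p (psi m) + ee m.
  apply: (@KK_mono _ _ _ p _ _ _ Kp z (hb' _ _ hb m)) => x /=.
  rewrite penvE; have := ha m x; have := Q0 x; rewrite ler_norml mul0r.
  set u := ee m => ? /andP[? ?]; lra.
rewrite pz; set u := ee m => ? /andP[? ?]; lra.
Qed.

Theorem mainTheorem17 (L : language) (M : structure L) (n : nat)
    (P Q : ('I_n -> M) -> R) :
  extremally_aleph0_saturated M ->
  definable P -> definable Q ->
  (forall x, 0 <= P x) -> (forall x, 0 <= Q x) ->
  (zero_set P `<=` zero_set Q <->
   forall eps : R, 0 < eps ->
     exists lam : R, 0 <= lam /\ forall x, Q x <= lam * P x + eps).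
Proof.
move=> hsat dP dQ P0 Q0; split; last first.
  move=> H x /= Px; apply/eqP; rewrite eq_le Q0 andbT.
  rewrite leNgt; apply/negP => Qx.
  have [lam [_ hl]] := H (Q x / 2) (divr_gt0 Qx (ltr0Sn _ 1)).
  by have := hl x; rewrite Px mulr0 add0r; lra.
move=> hZ eps eps0; apply: contrapT => hno.
have hx : forall m : nat, exists x, m%:R * P x + eps < Q x.
  move=> m; apply: contrapT => h; apply: hno; exists m%:R; split => // x.
  by rewrite leNgt; apply/negP => hlt; apply: h; exists x.
have [xs hxs] := choice hx.
have [psiP [hbP haP]] := @get_approx L M n P dP.
have [psiQ [hbQ haQ]] := @get_approx L M n Q dQ.
pose K := @KK L M n.
have cK : compact K := @KK_compact L M n.
have clK : closed K := @KK_closed L M n.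
have [BQ [BQ0 hBQ]] : exists BQ : R, 0 <= BQ /\ forall x, Q x <= BQ.
  have [B [B0 hB]] := @fbound L M (psiQ 0%N).
  exists (B + 1); split; first lra.
  move=> x; have := haQ 0%N x; have := hB (env x (default_env M)).
  rewrite !ler_norml invr1 => /andP[? ?] /andP[? ?]; lra.
have nK : @nface (FI L) K K.
  split; first by exists (@tp L M n (xs 0%N)); apply: tp_in.
  - exact: clK.
  - by split => // q1 q2 r t Kq1 Kq2.
have [c1 [ub1 nG1]] := @maxface (FI L) K cK K _ nK (hatN_good M _ _ hbP haP).
pose G1 := K `&` [set p | c1 <= - (hat psiP) p].
pose g (m : nat) := [set p : FI L -> R | - (BQ * ee m) <= - (hat psiP) p] `&` [set p | eps <= (hat psiQ) p].
have [p1 [Kp1 hp1]] : exists x, K x /\ forall j, setT j -> g j x.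
  apply: (@dir_inter _ K nat setT g cK).
  - by exists 0%N.
  - move=> j _.
    apply: (@closed_ext _ ((K `&` [set p | - (BQ * ee j) <= - (hat psiP) p]) `&` (K `&` [set p | eps <= (hat psiQ) p]))).
      by move=> p; split => [[[Kp h1] [_ h2]]|[Kp [h1 h2]]].
    apply: closedI.
      by have [_ hc _] := hatN_good M _ _ hbP haP; apply: hc.
    exact: (hat_closed_ge _ _ hbQ haQ).
  - move=> m _; exists (@tp L M n (xs m.+1)); split; first exact: tp_in.
    rewrite /g /= (hat_tp M _ _ hbP haP) (hat_tp M _ _ hbQ haQ); split => /=.
      have := hxs m.+1; have := hBQ (xs m.+1); have := P0 (xs m.+1).
      have E : ee m * m.+1%:R = 1 by rewrite mulVf // pnatr_eq0.
      have e0 := ee_gt0 m.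
      move: E e0; set u := ee m; set k := (m.+1)%:R => E e0 ? ? ?.
      have : u * (k * P (xs m.+1)) <= u * BQ by rewrite ler_pM2l //; lra.
      rewrite mulrA E mul1r; lra.
    by have := hxs m.+1; have := P0 (xs m.+1); have := (ler0n R m.+1); nra.
  - move=> i j _ _; exists (maxn i j) => // p [h1 h2]; split; split => //=.
      apply: le_trans h1; rewrite lerN2; apply: ler_wpM2l => //; apply: invS_le; exact: leq_maxl.
    apply: le_trans h1; rewrite lerN2; apply: ler_wpM2l => //; apply: invS_le; exact: leq_maxr.
have hP1 : (hat psiP) p1 <= 0.
  rewrite -oppr_ge0; apply: (@arch_gen 0 _ BQ) => // m.
  by have [h1 _] := hp1 m Logic.I; rewrite sub0r.
have hQ1 : eps <= (hat psiQ) p1 by have [_ h2] := hp1 0%N Logic.I.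
have hPnn : forall p, K p -> 0 <= (hat psiP) p by move=> p Kp; apply: (@hat_nonneg L M n P psiP hbP haP P0).
have c1le : c1 <= 0.
  case: nG1 => [[z [Kz hz]] _ _]; have := hPnn z Kz; rewrite /= in hz; lra.
have G1p1 : G1 p1 by split => //=; lra.
have G1P : forall p, G1 p -> (hat psiP) p = 0.
  move=> p [Kp /= hp]; have := ub1 p1 Kp1; have := hPnn p Kp; lra.
have [c2 [ub2 nG2]] := @maxface (FI L) K cK _ _ nG1 (hat_good M _ _ hbQ haQ).
have c2eps : eps <= c2 by apply: le_trans hQ1 (ub2 _ G1p1).
have hB : forall i : FI L, exists B, forall p, K p -> p i <= B.
  move=> i; have [B [_ hB]] := @KK_abs L M n i; exists B => p Kp.
  by have := hB p Kp; rewrite ler_norml => /andP[].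
have [p [G2p hext]] := @extreme (FI L) K cK clK _ nG2 hB.
have Kp : K p by case: G2p => -[].
have [b hb] := hsat 0%N (a0 L M) n p (conj Kp hext).
have hr : forall (psi : nat -> formula L), (forall m, fbounded n (psi m)) ->
    forall l, p (psi l) = feval (psi l) (env b (default_env M)).
  by move=> psi hbpsi l; rewrite -penvE; apply: hb; rewrite addn0.
have ePb : (hat psiP) p = P b by apply: (@hat_real L M n P psiP hbP haP p b Kp); apply: hr.
have eQb : (hat psiQ) p = Q b by apply: (@hat_real L M n Q psiQ hbQ haQ p b Kp); apply: hr.
case: G2p => G1p /= hc2.
have Pb : P b = 0 by rewrite -ePb; apply: G1P.
have := hZ b Pb; rewrite /zero_set /= => Qb.
move: hc2; rewrite eQb Qb; lra.
Qed.
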